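(* Let $\{p_1,p_2,p_3\}=\mathcal{F}\subseteq\mathcal{O}$ be a normal family of three objects. Then at most $2$ faces of $G$ are type-$1$ singular faces for $\mathcal{F}$.
   Context: $G$ is a simple triangulated graph embedded on a sphere (every face is bounded by a triangle), with positive edge weights; $\mathrm{dist}(X,Y)$ denotes the minimum weight of a path between a vertex of $X$ and a vertex of $Y$. Each object $p$ has a location $\mathrm{loc}(p)$, a nonempty vertex set inducing a connected subgraph, and a radius $\mathrm{rad}(p)\ge 0$. A family $\mathcal{F}$ is normal if locations of its members are pairwise disjoint and $\mathrm{dist}(\mathrm{loc}(p_1),\mathrm{loc}(p_2))>\mathrm{rad}(p_1)-\mathrm{rad}(p_2)$ for all ordered pairs of distinct $p_1,p_2\in\mathcal{F}$. Standing assumption: all values $\mathrm{dist}(u,v)$ and $\mathrm{dist}(u,v)-\mathrm{rad}(p)$ are pairwise different and shortest paths are unique. The Voronoi partition $(M_p)_{p\in\mathcal{F}}$ assigns $v$ to $M_{p_0}$ iff $\mathrm{dist}(v,\mathrm{loc}(p_0))-\mathrm{rad}(p_0)$ is minimum over $p\in\mathcal{F}$. Regions $M_{p}$ and $M_{p'}$ ($p\ne p'$) meet at a face $f$ if the boundary of $f$ contains a vertex of $M_p$ and a vertex of $M_{p'}$. A face $f$ is a type-$1$ singular face for $\mathcal{F}$ if there are three distinct objects of $\mathcal{F}$ whose Voronoi regions pairwise meet at $f$. *)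

(* Defs.v *)
From HB Require Import structures.
From mathcomp Require Import all_boot all_order all_algebra.
From mathcomp Require Import all_classical all_reals ereal.
Set Implicit Arguments. Unset Strict Implicit. Unset Printing Implicit Defensive.
Import Order.TTheory GRing.Theory Num.Theory.
Local Open Scope classical_set_scope.
Local Open Scope ring_scope.

Section Defs.
Variables (R : realType) (V : finType).

(* [adj] : edges of a simple graph; [rot v] : cyclic successor of a neighbour
   of v in the clockwise order around v (a rotation system = an embedding). *)

Definition nbhd (adj : rel V) (v : V) : {set V} := [set u | adj v u].

Definition simple_graph (adj : rel V) : Prop :=
  symmetric adj /\ irreflexive adj.

Definition rotation_system (adj : rel V) (rot : V -> V -> V) : Prop :=
  forall v,
    {in nbhd adj v, forall u, rot v u \in nbhd adj v} /\
    {in nbhd adj v &, injective (rot v)} /\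
    {in nbhd adj v &, forall u u', fconnect (rot v) u u'}.

(* the face to the left of dart (u,v): the face permutation maps the dart
   (u,v) to (v, rot v u) *)
Definition face_darts (rot : V -> V -> V) (u v : V) : {set V * V} :=
  [set (u, v); (v, rot v u); (rot v u, u)].

Definition darts (adj : rel V) : {set V * V} := [set d | adj d.1 d.2].

(* every face is bounded by a triangle: following the face permutation three
   times from any dart (u,v) returns to (u,v) *)
Definition triangulated (adj : rel V) (rot : V -> V -> V) : Prop :=
  forall u v, adj u v -> rot (rot v u) v = u /\ rot u (rot v u) = v.

Definition faces (adj : rel V) (rot : V -> V -> V) : {set {set V * V}} :=
  [set face_darts rot d.1 d.2 | d in darts adj].

Definition face_vertices (f : {set V * V}) : {set V} := [set d.1 | d in f].

(* the rotation system describes a cellular embedding of a connected graph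
   in the sphere: Euler characteristic 2, i.e. #V - #E + #F = 2 with
   #E = #darts / 2 *)
Definition sphere_triangulation (adj : rel V) (rot : V -> V -> V) : Prop :=
  [/\ simple_graph adj, rotation_system adj rot, triangulated adj rot,
      (forall u v, connect adj u v) &
      (2 * (#|V| + #|faces adj rot|) = #|darts adj| + 4)%N].

Definition pos_weights (adj : rel V) (w : V -> V -> R) : Prop :=
  forall u v, adj u v -> w u v = w v u /\ 0 < w u v.

Fixpoint walk_weight (w : V -> V -> R) (x : V) (s : seq V) : R :=
  if s is y :: s' then w x y + walk_weight w y s' else 0.

(* s is a path u = x_0, x_1, ..., x_k = v (written as u :: s) *)
Definition is_path (adj : rel V) (u v : V) (s : seq V) : bool :=
  [&& path adj u s, uniq (u :: s) & last u s == v].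

Definition dist (adj : rel V) (w : V -> V -> R) (u v : V) : \bar R :=
  ereal_inf [set (walk_weight w u s)%:E | s in [set s | is_path adj u v s]].

Definition distS (adj : rel V) (w : V -> V -> R) (X Y : {set V}) : \bar R :=
  ereal_inf [set dist adj w x y | x in [set x | x \in X] & y in [set y | y \in Y]].

Definition shortest_path (adj : rel V) (w : V -> V -> R) (u v : V) (s : seq V) :=
  is_path adj u v s /\ (walk_weight w u s)%:E = dist adj w u v.

Variable I : finType.

Definition induced_connected (adj : rel V) (L : {set V}) : Prop :=
  forall x y, x \in L -> y \in L ->
    connect [rel a b | [&& adj a b, a \in L & b \in L]] x y.

Definition valid_objects (adj : rel V) (loc : I -> {set V}) (rad : I -> R) :=
  forall p, loc p != finset.set0 /\ induced_connected adj (loc p) /\ 0 <= rad p.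

Definition normal_family (adj : rel V) (w : V -> V -> R) (loc : I -> {set V}) (rad : I -> R) : Prop :=
  forall p1 p2, p1 != p2 ->
    (forall x, x \in loc p1 -> x \notin loc p2) /\
    ((rad p1 - rad p2)%:E < distS adj w (loc p1) (loc p2))%E.

(* standing assumption: all values dist(u,v) and dist(u,v) - rad(p) are
   pairwise different (identifying the symmetric pairs {u,v} and all diagonal
   pairs (u,u)), and shortest paths are unique *)
Definition shifted_dist (adj : rel V) (w : V -> V -> R) (rad : I -> R) (o : option I) (u v : V) : \bar R :=
  if o is Some p then (dist adj w u v - (rad p)%:E)%E else dist adj w u v.

Definition same_key (o o' : option I) (u v u' v' : V) : Prop :=
  o = o' /\ [\/ (u = v /\ u' = v'), (u = u' /\ v = v') | (u = v' /\ v = u')].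

Definition generic (adj : rel V) (w : V -> V -> R) (rad : I -> R) : Prop :=
  (forall o o' u v u' v',
     shifted_dist adj w rad o u v = shifted_dist adj w rad o' u' v' ->
     same_key o o' u v u' v') /\
  (forall u v s s', shortest_path adj w u v s -> shortest_path adj w u v s' ->
     s = s').

Definition in_voronoi (adj : rel V) (w : V -> V -> R) (loc : I -> {set V}) (rad : I -> R) (p0 : I) (v : V) :=
  forall p, (distS adj w [set v]%SET (loc p0) - (rad p0)%:E <=
            distS adj w [set v]%SET (loc p) - (rad p)%:E)%E.

Definition regions_meet (adj : rel V) (w : V -> V -> R) (loc : I -> {set V}) (rad : I -> R) (p p' : I) (f : {set V * V}) : Prop :=
  exists x y, [/\ x \in face_vertices f, y \in face_vertices f,
                  in_voronoi adj w loc rad p x & in_voronoi adj w loc rad p' y].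

Definition type1_singular (adj : rel V) (w : V -> V -> R) (loc : I -> {set V}) (rad : I -> R) (f : {set V * V}) : Prop :=
  exists p1 p2 p3, [/\ p1 != p2, p1 != p3, p2 != p3 &
    [/\ regions_meet adj w loc rad p1 p2 f, regions_meet adj w loc rad p1 p3 f &
        regions_meet adj w loc rad p2 p3 f]].

End Defs.

(* Main.v *)
Require Import Defs.
From mathcomp Require Import all_boot all_order all_algebra.
From mathcomp Require Import all_classical all_reals ereal.
Local Open Scope classical_set_scope.

Module CombPart.
From mathcomp Require Import all_boot all_order zify.
Set Implicit Arguments. Unset Strict Implicit. Unset Printing Implicit Defensive.
Local Close Scope classical_set_scope.
Section Tree.
Variables (V : finType) (C : {set V}) (E : rel V).
Hypothesis EC : forall a b, E a b -> (a \in C) && (b \in C).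
Hypothesis Esym : symmetric E.
Hypothesis Econn : forall x y, x \in C -> y \in C -> connect E x y.

Lemma tree_bound : (2 * #|C| <= #|[set d : V * V | E d.1 d.2]| + 2)%N.
Proof.
have [C0|[r rC]] := set_0Vmem C; first by rewrite C0 cards0.
pose fix reach n v {struct n} := if n is m.+1 then reach m v || [exists u, E v u && reach m u]
                      else v == r.
have ex v : exists n, reach n v || (v \notin C).
  case vC: (v \in C); last by exists 0%N; rewrite orbT.
  have /connectP [p hp el] := Econn vC rC.
  exists (size p); rewrite orbF.
  elim: p v hp el {vC} => [|a p IH] v /=; first by move=> _ ->; rewrite eqxx.
  case/andP => hva hp el.
  by apply/orP; right; apply/existsP; exists a; rewrite hva IH.
pose dd v := ex_minn (ex v).
have ddP v : v \in C -> reach (dd v) v.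
  move=> vC; rewrite /dd; case: ex_minnP => n; rewrite vC orbF //.
have ddmin v n : reach n v -> (dd v <= n)%N.
  move=> h; rewrite /dd; case: ex_minnP => m _ hm; by apply: hm; rewrite h.
have step v : v \in C -> v != r -> exists2 u, E v u & (dd u < dd v)%N.
  move=> vC vr; have := ddP v vC.
  case E1: (dd v) => [|m] /=; first by rewrite (negbTE vr).
  case/orP => [h|/existsP [u /andP [hvu hu]]].
    by have := ddmin _ _ h; rewrite E1 ltnn.
  by exists u => //; rewrite ltnS ddmin.
pose par v := odflt v [pick u | E v u && (dd u < dd v)%N].
have parP v : v \in C -> v != r -> E v (par v) /\ (dd (par v) < dd v)%N.
  move=> vC vr; rewrite /par; case: pickP => [u /andP [h1 h2] //|h] /=.
  by have [u h1 h2] := step v vC vr; have := h u; rewrite h1 h2.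
pose C' := C :\ r.
pose F := [set (v, par v) | v in C'].
pose B := [set (par v, v) | v in C'].
have hC' v : v \in C' -> E v (par v) /\ (dd (par v) < dd v)%N.
  by rewrite !inE => /andP [vr vC]; apply: parP.
have cF : #|F| = #|C'|.
  by apply: card_in_imset => x y _ _ [].
have cB : #|B| = #|C'|.
  by apply: card_in_imset => x y _ _ [].
have dFB : F :&: B = set0.
  apply/setP => d; rewrite !inE; apply/negP => /andP [/imsetP [x hx ->] /imsetP [y hy [e1 e2]]].
  have [_ h1] := hC' x hx; have [_ h2] := hC' y hy.
  rewrite e2 in h1; rewrite -e1 in h2; lia.
have sub : F :|: B \subset [set d : V * V | E d.1 d.2].
  apply/subsetP => d; rewrite !inE => /orP [] /imsetP [x hx ->] /=; have [h _] := hC' x hx => //.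
  by rewrite Esym.
have := subset_leq_card sub; rewrite cardsU dFB cards0 subn0 cF cB.
have : #|C| = #|C'|.+1 by rewrite (cardsD1 r C) rC.
lia.
Qed.
End Tree.

Section Comb.
Variables (V : finType) (adj : rel V) (rot : V -> V -> V).
Hypothesis Hsph : sphere_triangulation adj rot.

Let Hsimple : simple_graph adj. Proof. by case: Hsph. Qed.
Let Hrot : rotation_system adj rot. Proof. by case: Hsph. Qed.
Let Htri : triangulated adj rot. Proof. by case: Hsph. Qed.
Let Hconn : forall u v, connect adj u v. Proof. by case: Hsph. Qed.

Lemma adj_sym u v : adj u v = adj v u.
Proof. by case: Hsimple => s _; apply: s. Qed.

Lemma adj_irr u : adj u u = false.
Proof. by case: Hsimple => _ i; apply: i. Qed.

Lemma rot_adj u v : adj u v -> adj v (rot v u).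
Proof.
move=> huv; have [h _] := Hrot v.
have : u \in nbhd adj v by rewrite inE adj_sym.
by move/h; rewrite inE.
Qed.

Definition fd (d : V * V) := face_darts rot d.1 d.2.
Definition phi (d : V * V) := (d.2, rot d.2 d.1).
Definition rv (d : V * V) := (d.2, d.1).

Lemma dartE d : (d \in darts adj) = adj d.1 d.2.
Proof. by rewrite inE. Qed.

Lemma phi_dart d : d \in darts adj -> phi d \in darts adj.
Proof. by rewrite !dartE /= => /rot_adj. Qed.

Lemma rv_dart d : d \in darts adj -> rv d \in darts adj.
Proof. by rewrite !dartE /= adj_sym. Qed.

Lemma phi3 d : d \in darts adj -> phi (phi (phi d)) = d.
Proof.
case: d => u v; rewrite dartE /= => h.
rewrite /phi /=; have [-> ->] := Htri h; done.
Qed.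

Lemma fdE d : d \in darts adj -> fd d = [set d; phi d; phi (phi d)].
Proof.
case: d => u v; rewrite dartE /= => h.
rewrite /fd /face_darts /phi /=; have [-> _] := Htri h; done.
Qed.

Lemma fd_phi d : d \in darts adj -> fd (phi d) = fd d.
Proof.
move=> hd; rewrite fdE ?phi_dart // fdE // phi3 //.
apply/setP => e; rewrite !inE; by do 3 case: (_ == _).
Qed.

Lemma fd_self d : d \in fd d.
Proof. by rewrite /fd /face_darts !inE; case: d => u v /=; rewrite eqxx. Qed.

Lemma fd_in d e : d \in darts adj -> e \in fd d -> fd e = fd d.
Proof.
move=> hd; have -> : (e \in fd d) = (e \in [set d; phi d; phi (phi d)]) by rewrite fdE.
rewrite !inE => /orP [/orP[/eqP->|/eqP->]|/eqP->] //.
  by rewrite fd_phi.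
by rewrite fd_phi ?phi_dart // fd_phi.
Qed.

Lemma fd_darts d e : d \in darts adj -> e \in fd d -> e \in darts adj.
Proof.
move=> hd; rewrite fdE // !inE => /orP [/orP[/eqP->|/eqP->]|/eqP->]; rewrite -dartE //.
  by apply: phi_dart.
by do 2 apply: phi_dart.
Qed.

Lemma facesP f : f \in faces adj rot -> exists2 d, d \in darts adj & f = fd d.
Proof. by case/imsetP => d hd ->; exists d. Qed.

Lemma fd_faces d : d \in darts adj -> fd d \in faces adj rot.
Proof. by move=> hd; apply/imsetP; exists d. Qed.

Lemma faces_disj f g e : f \in faces adj rot -> g \in faces adj rot ->
  e \in f -> e \in g -> f = g.
Proof.
move=> /facesP [d hd ->] /facesP [d' hd' ->] h1 h2.
by rewrite -(fd_in hd h1) (fd_in hd' h2).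
Qed.

Lemma face_sub f : f \in faces adj rot -> f \subset darts adj.
Proof. by move=> /facesP [d hd ->]; apply/subsetP => e; apply: fd_darts. Qed.

Lemma face_distinct u v : adj u v ->
  [/\ u != v, v != rot v u & rot v u != u].
Proof.
move=> h; have h1 := rot_adj h.
have [h2 _] := Htri h.
split.
- by apply/eqP => e; move: h; rewrite e adj_irr.
- by apply/eqP => e; move: h1; rewrite -e adj_irr.
- apply/eqP => e; have := rot_adj h1; rewrite h2 e adj_irr //.
Qed.


Lemma dual_conn (M : {set {set V * V}}) :
  (exists2 f, f \in M & f \in faces adj rot) ->
  (forall f e, f \in M -> e \in f -> fd (rv e) \in M) ->
  forall d, d \in darts adj -> fd d \in M.
Proof.
move=> [f0 f0M f0F] hcl.
pose P d := fd d \in M.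
have Prv d : P d -> P (rv d) by move=> h; apply: hcl h (fd_self d).
have Pphi d : d \in darts adj -> P d -> P (phi d) by move=> hd; rewrite /P fd_phi.
pose Q v := forall y, adj y v -> P (y, v).
have around u v : adj u v -> P (u, v) -> Q v.
  move=> huv Puv y hyv.
  have [hr [_ hc]] := Hrot v.
  have hu : u \in nbhd adj v by rewrite inE adj_sym.
  have hy : y \in nbhd adj v by rewrite inE adj_sym.
  rewrite -(iter_findex (hc _ _ hu hy)).
  suff : forall n, iter n (rot v) u \in nbhd adj v /\ P (iter n (rot v) u, v) by move=> h; case: (h (findex (rot v) u y)).
  elim => [|n [IHn IHP]] /=; first by split.
  split; first by apply: (hr _ IHn).
  have hd : (iter n (rot v) u, v) \in darts adj by rewrite dartE /= adj_sym; move: IHn; rewrite inE.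
  by have := Prv _ (Pphi _ hd IHP).
have prop v y : Q v -> adj v y -> Q y.
  move=> Qv hvy; apply: (around v) => //.
  by apply: (Prv (y, v)); apply: Qv; rewrite adj_sym.
have allQ z : Q z.
  have [d0 hd0 E] := facesP f0F.
  have Q0 : Q d0.2.
    apply: (around d0.1); first by rewrite -dartE.
    by rewrite /P -surjective_pairing -E.
  have /connectP [p hp ->] := Hconn d0.2 z.
  elim: p (d0.2) Q0 hp => [|a p IH] x Qx //=.
  by case/andP => hxa hp; apply: IH hp; apply: prop hxa.
by case=> a b; rewrite dartE /= => hab; apply: allQ.
Qed.


Lemma key (C : {set V}) n : forall (M : {set {set V * V}}) (A : {set V * V}),
  #|M| = n -> M \subset faces adj rot ->
  (exists2 g, g \in faces adj rot & g \notin M) ->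
  (forall f, f \in M -> f \subset A) ->
  (forall d, d \in A -> d \in darts adj) ->
  (forall d, d \in A -> rv d \in A) ->
  (forall d, d \in A -> (d.1 \in C) && (d.2 \in C)) ->
  (forall x y, x \in C -> y \in C -> connect (fun a b => (a, b) \in A) x y) ->
  (2 * (#|C| + #|M|) <= #|A| + 2)%N.
Proof.
elim: n => [|n IH] M A cM MF [g gF gM] MA AD Asym AC Acon.
  have -> : #|M| = 0%N by [].
  rewrite addn0.
  have -> : A = [set d : V * V | (fun a b => (a, b) \in A) d.1 d.2].
    by apply/setP => -[a b]; rewrite inE.
  apply: (@tree_bound V C (fun a b => (a, b) \in A)).
  - by move=> a b; apply/idP/idP => /Asym.
  - exact: Acon.
have [f0 f0M] : exists f, f \in M by apply/card_gt0P; rewrite cM.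
have [/existsP [f /andP [fM /existsP [e /andP [ef eM]]]] | hno] :=
  boolP [exists f in M, exists e in f, fd (rv e) \notin M]; last first.
  exfalso; have [d dD gE] := facesP gF; move: gM; rewrite gE.
  apply/negP/negPn; apply: dual_conn => //.
    by exists f0 => //; apply: (subsetP MF).
  move=> f e fM ef; apply/negPn/negP => h; move/negP: hno; apply.
  by apply/existsP; exists f; rewrite fM; apply/existsP; exists e; rewrite ef h.
have fF : f \in faces adj rot by apply: (subsetP MF).
have eD : e \in darts adj by apply: (subsetP (face_sub fF)).
have fE : f = fd e := faces_disj fF (fd_faces eD) ef (fd_self e).
move: e ef eM eD fE => [u v] ef eM eD fE.
have hadj : adj u v by rewrite dartE in eD.
have [nuv nvx nxu] := face_distinct hadj.
set x := rot v u in nvx nxu.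
have vxf : (v, x) \in f by rewrite fE /fd /face_darts !inE eqxx !orbT.
have xuf : (x, u) \in f by rewrite fE /fd /face_darts !inE eqxx !orbT.
have fA : forall d, d \in f -> d \in A by move=> d; apply: (subsetP (MA f fM)).
have uvA := fA _ ef; have vxA := fA _ vxf; have xuA := fA _ xuf.
have vuA : (v, u) \in A by apply: (Asym (u, v)).
have uxA : (u, x) \in A by apply: (Asym (x, u)).
have xvA : (x, v) \in A by apply: (Asym (v, x)).
have neq : (u, v) != (v, u) by rewrite xpair_eqE negb_and nuv.
have cA : #|A| = (#|A :\ (u, v) :\ (v, u)| + 2)%N.
  have h1 : (v, u) \in A :\ (u, v) by rewrite in_setD1 eq_sym neq vuA.
  rewrite (cardsD1 (u, v) A) uvA (cardsD1 (v, u) (A :\ (u, v))) h1 /=.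
  by rewrite add1n add1n addn2.
have cM' : #|M :\ f| = n by move: cM; rewrite (cardsD1 f M) fM /= => -[].
have := IH (M :\ f) (A :\ (u, v) :\ (v, u)) cM'.
have MF' : M :\ f \subset faces adj rot.
  by apply/subsetP => h; rewrite in_setD1 => /andP [_ /(subsetP MF)].
have gM' : g \notin M :\ f by rewrite in_setD1 (negbTE gM) andbF.
have MA' : forall f', f' \in M :\ f -> f' \subset A :\ (u, v) :\ (v, u).
  move=> f'; rewrite in_setD1 => /andP [f'f f'M]; apply/subsetP => d df'.
  have f'F : f' \in faces adj rot by apply: (subsetP MF).
  rewrite !in_setD1 (subsetP (MA f' f'M) d df') andbT.
  apply/andP; split; apply/eqP => dE; subst d.
  - have E' := faces_disj f'F (fd_faces (rv_dart eD)) df' (fd_self _).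
    by move: eM; rewrite /rv /= -E' f'M.
  - have E' := faces_disj f'F fF df' ef.
    by move: f'f; rewrite E' eqxx.
have AD' : forall d, d \in A :\ (u, v) :\ (v, u) -> d \in darts adj.
  by move=> d; rewrite !in_setD1 => /and3P [_ _ /AD].
have AC' : forall d, d \in A :\ (u, v) :\ (v, u) -> (d.1 \in C) && (d.2 \in C).
  by move=> d; rewrite !in_setD1 => /and3P [_ _ /AC].
have Asym' : forall d, d \in A :\ (u, v) :\ (v, u) -> rv d \in A :\ (u, v) :\ (v, u).
  case=> a b; rewrite !in_setD1 => /and3P [h1 h2 hA].
  rewrite (Asym _ hA) andbT /rv /=.
  rewrite !xpair_eqE in h1 h2 *.
  by rewrite [(b == v) && _]andbC [(b == u) && _]andbC h1 h2.
have e1 : (u == v) = false by apply: negbTE.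
have e2 : (v == u) = false by rewrite eq_sym.
have e3 : (v == x) = false by apply: negbTE.
have e4 : (x == v) = false by rewrite eq_sym.
have e5 : (x == u) = false by apply: negbTE.
have e6 : (u == x) = false by rewrite eq_sym.
have Acon' : forall a b, a \in C -> b \in C ->
    connect (fun a b => (a, b) \in A :\ (u, v) :\ (v, u)) a b.
  move=> a b aC bC.
  apply: (@connect_sub _ (fun a b => (a, b) \in A) _ _ a b (Acon a b aC bC)).
  move=> a' b' h.
  case: (boolP ((a', b') \in A :\ (u, v) :\ (v, u))) => h'; first by apply: connect1.
  rewrite !in_setD1 h andbT negb_and !negbK in h'.
  case/orP: h' => /eqP [-> ->].
  - apply: (@connect_trans _ _ x); apply: connect1;
      by rewrite /= !in_setD1 !xpair_eqE ?e1 ?e2 ?e3 ?e4 ?e5 ?e6 ?eqxx /= ?vxA ?xuA.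
  - apply: (@connect_trans _ _ x); apply: connect1;
      by rewrite /= !in_setD1 !xpair_eqE ?e1 ?e2 ?e3 ?e4 ?e5 ?e6 ?eqxx /= ?uxA ?xvA.
move=> hI.
have hJ := hI MF' (ex_intro2 _ _ g gF gM').
have hK := hJ MA' AD' Asym' AC'.
have hL := hK Acon'.
move: hL; rewrite cM cM' cA => h.
by rewrite addnS mulnS addnC; apply: leq_add h (leqnn 2).
Qed.

Lemma sum_bool_card (T : finType) (A : {set T}) (P : pred T) :
  (\sum_(x in A) (P x : nat))%N = #|A :&: [set x | P x]|.
Proof.
rewrite -sum1_card [RHS]big_mkcond [LHS]big_mkcond /=.
by apply: eq_bigr => x _; rewrite !inE; case: (x \in A); case: (P x).
Qed.

Section Main.
Variable c : V -> 'I_3.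
Hypothesis Hcol : forall x y, c x = c y ->
  connect (fun a b => [&& adj a b, c a == c x & c b == c x]) x y.

Definition Cc (i : 'I_3) := [set v | c v == i].
Definition Ac (i : 'I_3) := [set d in darts adj | (c d.1 == i) && (c d.2 == i)].
Definition Mc (i : 'I_3) := [set f in faces adj rot | f \subset Ac i].
Definition Bc := [set d in darts adj | c d.1 != c d.2].
Definition Mono := [set f in faces adj rot | [exists i, f \subset Ac i]].

Lemma key_c (i : 'I_3) g : g \in faces adj rot -> (forall d, d \in g -> c d.1 != c d.2) ->
  (2 * (#|Cc i| + #|Mc i|) <= #|Ac i| + 2)%N.
Proof.
move=> gF gB.
apply: (key (n := #|Mc i|)) => //.
- by apply/subsetP => f; rewrite inE => /andP [].
- exists g => //; rewrite inE gF /=; apply/negP => /subsetP h.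
  have [d dD gE] := facesP gF.
  have := h d; rewrite gE fd_self inE => /(_ isT) /and3P [_ /eqP h1 /eqP h2].
  by move: (gB d); rewrite gE fd_self h1 h2 eqxx => /(_ isT).
- by move=> f; rewrite inE => /andP [].
- by move=> d; rewrite inE => /andP [].
- by case=> a b; rewrite !inE /rv /= => /and3P [h1 h2 h3]; rewrite adj_sym h1 h3 h2.
- by move=> d; rewrite !inE => /and3P [_ -> ->].
- move=> x y; rewrite !inE => /eqP cx /eqP cy.
  have := @Hcol x y (etrans cx (esym cy)).
  apply: connect_sub => a b /and3P [h1 h2 h3]; apply: connect1.
  by rewrite !inE /= h1 -cx h2 h3.
Qed.

Lemma cardV_sum : #|V| = (\sum_(i < 3) #|Cc i|)%N.
Proof.
rewrite -sum1_card (partition_big c predT) //=.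
by apply: eq_bigr => i _; rewrite -sum1dep_card.
Qed.

Lemma cardD_sum : #|darts adj| = (\sum_(i < 3) #|Ac i| + #|Bc|)%N.
Proof.
rewrite -sum1_card (bigID (fun d => c d.1 == c d.2)) /=.
congr (_ + _)%N; last first.
  by rewrite -sum1_card; apply: eq_bigl => d; rewrite !inE.
rewrite (partition_big (fun d => c d.1) predT) //=.
apply: eq_bigr => i _; rewrite -sum1_card; apply: eq_bigl => d.
rewrite !inE; case: (c d.1 =P i) => [->|]; rewrite ?andbF ?andbT //.
by rewrite eq_sym.
Qed.

Lemma mono_le : (#|Mono| <= \sum_(i < 3) #|Mc i|)%N.
Proof.
rewrite -sum1_card.
apply: (@leq_trans (\sum_(f in Mono) \sum_(i < 3) (f \in Mc i : nat))%N).
  apply: leq_sum => f; rewrite inE => /andP [fF /existsP [i hi]].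
  rewrite (bigD1 i) //= inE fF hi; exact: leq_addr.
rewrite exchange_big /=; apply: leq_sum => i _.
rewrite sum_bool_card; apply: subset_leq_card; apply/subsetP => f; rewrite !inE.
by case/andP.
Qed.

Lemma two_le (T : finType) (X : {set T}) a b : a != b -> a \in X -> b \in X -> (2 <= #|X|)%N.
Proof.
move=> ab aX bX; have <- : #|[set a; b]| = 2%N by rewrite cards2 ab.
by apply: subset_leq_card; apply/subsetP => z; rewrite !inE => /orP [] /eqP ->.
Qed.

Lemma faces_B_le : (\sum_(f in faces adj rot) #|f :&: Bc| <= #|Bc|)%N.
Proof.
have -> : (\sum_(f in faces adj rot) #|f :&: Bc| =
   \sum_(f in faces adj rot) \sum_(d in Bc) (d \in f : nat))%N.
  apply: eq_bigr => f _; rewrite sum_bool_card setIC.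
  by apply: eq_card => d; rewrite !inE.
rewrite exchange_big /= -sum1_card; apply: leq_sum => d _.
rewrite sum_bool_card; apply/card_le1P => f1; rewrite !inE => /andP [f1F df1] f2.
rewrite !inE; apply/idP/eqP => [/andP [f2F df2]|->]; last by rewrite f1F df1.
exact: faces_disj f2F f1F df2 df1.
Qed.

Lemma face_pt (S : {set {set V * V}}) f :
  (forall f, f \in S -> (forall d, d \in f -> c d.1 != c d.2)) ->
  f \in faces adj rot ->
  (2 * (f \notin Mono) + (f \in S) <= #|f :&: Bc|)%N.
Proof.
move=> hS fF; have [[u v] eD fE] := facesP fF.
have hadj : adj u v by rewrite dartE in eD.
have [nuv nvx nxu] := face_distinct hadj.
set x := rot v u in nvx nxu.
have fE' : f = [set (u, v); (v, x); (x, u)] by rewrite fE.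
have d1 : (u, v) \in f by rewrite fE' !inE eqxx.
have d2 : (v, x) \in f by rewrite fE' !inE eqxx !orbT.
have d3 : (x, u) \in f by rewrite fE' !inE eqxx !orbT.
have inB d : d \in f -> c d.1 != c d.2 -> d \in f :&: Bc.
  move=> df h; rewrite !inE df h andbT /=; rewrite -dartE.
  by apply: (fd_darts eD); rewrite -fE.
have n12 : (u, v) != (v, x) by rewrite xpair_eqE negb_and nuv.
have n23 : (v, x) != (x, u) by rewrite xpair_eqE negb_and nvx.
have n13 : (u, v) != (x, u) by rewrite xpair_eqE negb_and eq_sym nxu.
case fS: (f \in S).
  have hc := hS f fS.
  have -> : f :&: Bc = f.
    apply/setP => d; rewrite !inE; case df: (d \in f); rewrite ?andbF //=.
    by have := inB d df (hc d df); rewrite !inE df.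
  have -> : #|f| = 3%N.
    rewrite fE' setUC cardsU1 cards2 n12 !inE.
    by move: n13 n23; rewrite ![(x, u) == _]eq_sym => /negbTE -> /negbTE ->.
  by case: (f \in Mono).
case fM: (f \in Mono) => //=; rewrite addn0 muln1.
have nm : ~~ ((c u == c v) && (c v == c x)).
  apply/negP => /andP [/eqP e1 /eqP e2]; move/negbT: fM; rewrite inE fF /=; apply/negP/negPn.
  have A2 : adj v x by have := fd_darts eD (e := (v, x)); rewrite -fE dartE; apply.
  have A3 : adj x u by have := fd_darts eD (e := (x, u)); rewrite -fE dartE; apply.
  apply/existsP; exists (c u); apply/subsetP => d; rewrite fE' !inE => /orP [/orP [] | ] /eqP -> /=;
    by rewrite -?e2 -?e1 ?eqxx ?hadj ?A2 ?A3.
case: (boolP (c u == c v)) => huv.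
  rewrite huv /= in nm.
  apply: (two_le n23); apply: inB => //=.
  by move/eqP: huv => ->; rewrite eq_sym.
case: (boolP (c v == c x)) => hvx.
  apply: (two_le n13); apply: inB => //=.
  by move/eqP: hvx => <-; rewrite eq_sym.
by apply: (two_le n12); apply: inB.
Qed.

Theorem comb_main (S : {set {set V * V}}) :
  (forall f, f \in S -> f \in faces adj rot /\ (forall d, d \in f -> c d.1 != c d.2)) ->
  (#|S| <= 2)%N.
Proof.
move=> hS.
have [->|[g gS]] := set_0Vmem S; first by rewrite cards0.
have [gF gB] := hS g gS.
have Hsum : (\sum_(i < 3) 2 * (#|Cc i| + #|Mc i|) <= \sum_(i < 3) (#|Ac i| + 2))%N.
  by apply: leq_sum => i _; apply: key_c gF gB.
rewrite -big_distrr big_split big_split /= sum_nat_const card_ord in Hsum.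
have hV := cardV_sum; have hD := cardD_sum; have hM := mono_le.
have hF : (#|Mono| + #|faces adj rot :\: Mono| = #|faces adj rot|)%N.
  rewrite -(cardsID Mono (faces adj rot)); congr (_ + _)%N.
  by apply: eq_card => f; rewrite !inE; case: (f \in faces adj rot); rewrite ?andbT ?andbF.
have hB := faces_B_le.
have hP : (\sum_(f in faces adj rot) (2 * (f \notin Mono) + (f \in S)) <=
           \sum_(f in faces adj rot) #|f :&: Bc|)%N.
  by apply: leq_sum => f fF; apply: face_pt => // f' /hS [].
rewrite big_split /= -big_distrr /= !sum_bool_card in hP.
have e1 : #|faces adj rot :&: [set x | x \notin Mono]| = #|faces adj rot :\: Mono|.
  by apply: eq_card => f; rewrite !inE andbC.
have e2 : #|faces adj rot :&: [set x | x \in S]| = #|S|.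
  apply: eq_card => f; rewrite !inE; case fS: (f \in S); rewrite ?andbT ?andbF //.
  by have [] := hS f fS.
rewrite e1 e2 in hP.
have [_ _ _ _ hE] := Hsph.
move: Hsum hV hD hM hF hB hP hE.
move: (\sum_(i < 3) #|Cc i|)%N (\sum_(i < 3) #|Mc i|)%N (\sum_(i < 3) #|Ac i|)%N.
move: (\sum_(f in faces adj rot) #|f :&: Bc|)%N #|V| #|darts adj| #|Mono|.
move: #|faces adj rot :\: Mono| #|faces adj rot| #|Bc| #|S|.
move=> *; lia.
Qed.

End Main.

End Comb.

End CombPart.

Module AnalPart.
From mathcomp Require Import all_boot all_order all_algebra.
From mathcomp Require Import all_classical all_reals ereal.
From mathcomp Require Import lra.
Set Implicit Arguments. Unset Strict Implicit. Unset Printing Implicit Defensive.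
Import Order.TTheory GRing.Theory Num.Theory.
Local Open Scope classical_set_scope.
Local Open Scope ring_scope.
Section FinMin.
Variable R : realType.

Lemma finite_min (S : set (\bar R)) (s : seq (\bar R)) :
  S `<=` [set x | x \in s] -> (exists x, S x) ->
  exists2 x, S x & forall y, S y -> (x <= y)%E.
Proof.
elim: s S => [|a s IH] S hS [x Sx]; first by have := hS x Sx.
have hSc y : S y -> y = a \/ y \in s.
  by move=> /hS /=; rewrite in_cons => /orP [/eqP ->|]; [left|right].
case: (pselect (exists y, S y /\ y \in s)) => [[y [Sy ys]]|hno].
  have [m [Sm ms] hm] := IH [set y | S y /\ y \in s] (fun y h => h.2) (ex_intro _ y (conj Sy ys)).
  case: (pselect (S a)) => Sa.
    have [am|ma] := leP a m.
      exists a => // z /[dup] Sz /hSc [->//|zs].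
      by apply: le_trans am (hm z (conj Sz zs)).
    exists m => // z /[dup] Sz /hSc [->|zs]; first exact: ltW.
    exact: hm.
  exists m => // z /[dup] Sz /hSc [e|zs]; first by rewrite e in Sz.
  exact: hm.
have xa : x = a.
  by case: (hSc x Sx) => // xs; exfalso; apply: hno; exists x.
exists a; first by rewrite -xa.
move=> z /[dup] Sz /hSc [->//|zs]; exfalso; apply: hno; exists z; done.
Qed.

Lemma finite_inf (S : set (\bar R)) (s : seq (\bar R)) :
  S `<=` [set x | x \in s] -> (exists x, S x) ->
  exists2 x, S x & ereal_inf S = x.
Proof.
move=> hS hne; have [x Sx hx] := finite_min hS hne.
exists x => //; apply/le_anti/andP; split.
  exact: ereal_inf_lbound.
by apply: le_ereal_inf_tmp => y /hx.
Qed.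

End FinMin.

Section Dist.
Variables (R : realType) (V : finType) (adj : rel V) (w : V -> V -> R).
Hypothesis adj_sym : symmetric adj.
Hypothesis adj_irr : irreflexive adj.
Hypothesis Hw : pos_weights adj w.
Hypothesis Hconn : forall u v, connect adj u v.

Local Notation W := (walk_weight w).

Lemma W_cat x p1 p2 : W x (p1 ++ p2) = W x p1 + W (last x p1) p2.
Proof. by elim: p1 x => [|a p IH] x /=; rewrite ?add0r // IH addrA. Qed.

Lemma W_ge0 x p : path adj x p -> 0 <= W x p.
Proof.
elim: p x => [|a p IH] x /=; first by [].
case/andP => hxa hp; apply: addr_ge0; last exact: IH.
by have [_ /ltW] := Hw hxa.
Qed.

Lemma walk_short z t : path adj z t ->
  exists2 s, is_path adj z (last z t) s & W z s <= W z t.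
Proof.
elim: t z => [|a t IH] z /=.
  by move=> _; exists [::]; rewrite /is_path //= eqxx.
case/andP => hza hp.
have [s1 /and3P [p1 u1 /eqP l1] le1] := IH a hp.
have wza : 0 < w z a by have [] := Hw hza.
case: (boolP (z \in a :: s1)) => zin.
  have za : z != a by apply/eqP => e; move: hza; rewrite e adj_irr.
  have zs1 : z \in s1 by move: zin; rewrite in_cons (negbTE za).
  case/splitPr: zs1 p1 u1 l1 le1 => q1 q2 p1 u1 l1 le1.
  exists q2.
    move: p1; rewrite cat_path /= => /and3P [_ _ pq2].
    move: u1; rewrite -cat_cons cat_uniq => /and3P [_ _ uq2].
    by rewrite /is_path pq2 uq2 -l1 last_cat /=.
  have e1 := W_cat a q1 (z :: q2).
  move: p1; rewrite cat_path /= => /and3P [pq1 hl pq2].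
  have h1 := W_ge0 pq1; have [_ h2] := Hw hl.
  rewrite /= in e1; rewrite e1 in le1.
  lra.
exists (a :: s1).
  apply/and3P; split; first by rewrite /= hza.
    by rewrite [uniq (z :: _)]cons_uniq zin.
  by rewrite /= l1.
by rewrite /=; lra.
Qed.

Definition rd u v := fine (dist adj w u v).

Fixpoint allseq (n : nat) : seq (seq V) :=
  if n is m.+1 then [::] :: [seq x :: t | x <- enum V, t <- allseq m] else [:: [::]].

Lemma mem_allseq n s : (size s <= n)%N -> s \in allseq n.
Proof.
elim: n s => [|n IH] [|x s] //=.
rewrite ltnS => hs; rewrite in_cons /=.
by apply: (allpairs_f (fun x t => x :: t)); rewrite ?mem_enum // IH.
Qed.

Lemma dist_att u v : exists2 s, is_path adj u v s & dist adj w u v = (W u s)%:E.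
Proof.
pose S := [set (W u s)%:E | s in [set s | is_path adj u v s]].
have [x [s hs <-] hinf] : exists2 x, S x & ereal_inf S = x.
  apply: (@finite_inf _ S [seq (W u s)%:E | s <- allseq #|V|]).
    move=> _ [s hs <-] /=; apply: map_f; apply: mem_allseq.
    case/and3P: hs => _ hu _.
    have := uniq_leq_size hu (fun x _ => mem_enum V x) => /=.
    by rewrite -cardE => /ltnW.
  have /connectP [p hp e] := Hconn u v.
  have [s hs _] := walk_short hp; exists (W u s)%:E; exists s => //.
  by rewrite /= e.
by exists s => //; rewrite -hinf.
Qed.

Lemma dist_lb u v s : is_path adj u v s -> (dist adj w u v <= (W u s)%:E)%E.
Proof. by move=> h; apply: ereal_inf_lbound; exists s. Qed.

Lemma distE u v : dist adj w u v = (rd u v)%:E.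
Proof. by rewrite /rd; have [s _ ->] := dist_att u v. Qed.

Lemma rd_lb u v s : is_path adj u v s -> rd u v <= W u s.
Proof. by move/dist_lb; rewrite distE lee_fin. Qed.

Lemma rd_att u v : exists2 s, is_path adj u v s & rd u v = W u s.
Proof. by have [s hs e] := dist_att u v; exists s => //; rewrite /rd e. Qed.

Lemma rd_walk u t : path adj u t -> rd u (last u t) <= W u t.
Proof. by move=> /walk_short [s hs le]; apply: le_trans (rd_lb hs) le. Qed.

Lemma rd_ge0 u v : 0 <= rd u v.
Proof. have [s /and3P [hs _ _] ->] := rd_att u v; exact: W_ge0. Qed.

Lemma rd_refl u : rd u u = 0.
Proof.
apply/le_anti; rewrite rd_ge0 andbT.
by have := @rd_lb u u [::]; rewrite /is_path /= eqxx => /(_ isT).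
Qed.

Lemma rd_end_tri z a u : adj a u -> rd z u <= rd z a + w a u.
Proof.
move=> hau; have [s /and3P [hs _ /eqP ls] ->] := rd_att z a.
have hp : path adj z (rcons s u) by rewrite rcons_path hs ls.
have := rd_walk hp; rewrite last_rcons -cats1 W_cat /= ls addr0; done.
Qed.

Lemma rd_sym u v : rd u v = rd v u.
Proof.
have claim t x : path adj x t -> rd (last x t) x <= W x t.
  elim: t x => [|a t IH] x /=; first by rewrite rd_refl.
  case/andP => hxa hp.
  have h1 := IH a hp.
  have hax : adj a x by rewrite adj_sym.
  have h2 := rd_end_tri (last a t) hax.
  have [e _] := Hw hxa.
  rewrite e; lra.
have one x y : rd y x <= rd x y.
  have [s /and3P [hs _ /eqP ls] ->] := rd_att x y.
  by have := claim s x hs; rewrite ls.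
by apply/le_anti; rewrite !one.
Qed.

Lemma rd_front_tri v u z : adj v u -> rd v z <= w v u + rd u z.
Proof.
move=> hvu; rewrite rd_sym (rd_sym u z).
have huv : adj u v by rewrite adj_sym.
have := rd_end_tri z huv; have [e _] := Hw hvu.
rewrite -e; lra.
Qed.

Variables (loc : 'I_3 -> {set V}) (rad : 'I_3 -> R).
Hypothesis Hval : valid_objects adj loc rad.
Hypothesis Hgen : generic adj w rad.
Hypothesis Hnorm : normal_family adj w loc rad.


Lemma distS_att (X Y : {set V}) : (exists x, x \in X) -> (exists y, y \in Y) ->
  exists x, exists y, [/\ x \in X, y \in Y & distS adj w X Y = (rd x y)%:E].
Proof.
move=> [x0 hx0] [y0 hy0].
pose S := [set dist adj w x y | x in [set x | x \in X] & y in [set y | y \in Y]].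
have [z [x hx [y hy <-]] hinf] : exists2 z, S z & ereal_inf S = z.
  apply: (@finite_inf _ S [seq dist adj w x y | x <- enum V, y <- enum V]).
    move=> _ [x hx [y hy <-]] /=.
    by apply: (allpairs_f (fun x y => dist adj w x y)); rewrite mem_enum.
  by exists (dist adj w x0 y0); exists x0 => //; exists y0.
by exists x, y; split => //; rewrite -distE -hinf.
Qed.

Lemma distS_lb (X Y : {set V}) x y : x \in X -> y \in Y ->
  (distS adj w X Y <= (rd x y)%:E)%E.
Proof.
move=> hx hy; rewrite -distE.
by apply: ereal_inf_lbound; exists x => //; exists y.
Qed.

Lemma loc_ne p : exists x, x \in loc p.
Proof. by have [/set0Pn [x hx] _] := Hval p; exists x. Qed.

Definition dsv (v : V) (Y : {set V}) := fine (distS adj w [set v]%SET Y).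

Lemma dsv_att v p : exists2 y, y \in loc p & dsv v (loc p) = rd v y /\
   distS adj w [set v]%SET (loc p) = (rd v y)%:E.
Proof.
have [x [y [hx hy e]]] := distS_att (ex_intro _ v (set11 v)) (loc_ne p).
move: hx e; rewrite inE => /eqP -> e; exists y => //; by rewrite /dsv e.
Qed.

Lemma dsvE v p : distS adj w [set v]%SET (loc p) = (dsv v (loc p))%:E.
Proof. by have [y _ [-> ->]] := dsv_att v p. Qed.

Lemma dsv_lb v p y : y \in loc p -> dsv v (loc p) <= rd v y.
Proof. by move=> hy; have := distS_lb (set11 v) hy; rewrite dsvE lee_fin. Qed.

Definition val p v := dsv v (loc p) - rad p.

Lemma in_voronoiE p v : in_voronoi adj w loc rad p v <-> forall q, val p v <= val q v.
Proof.
rewrite /in_voronoi /val; split => h q; move: (h q); rewrite !dsvE -!EFinB lee_fin //.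
Qed.

Lemma val_inj v p q : val p v = val q v -> p = q.
Proof.
have [x hx [ex _]] := dsv_att v p; have [y hy [ey _]] := dsv_att v q.
rewrite /val ex ey => e.
have [h _] := Hgen.
have := h (Some p) (Some q) v x v y.
rewrite /shifted_dist !distE -!EFinB e => /(_ erefl).
by case => -[].
Qed.

Lemma ex_min v : exists p, [forall q, val p v <= val q v].
Proof.
case: (@arg_minP _ _ 'I_3 ord0 predT (fun p => val p v) isT) => p _ hp.
by exists p; apply/forallP => q; apply: hp.
Qed.

Definition col v := xchoose (ex_min v).

Lemma colP v q : val (col v) v <= val q v.
Proof. by have /forallP := xchooseP (ex_min v); apply. Qed.

Lemma col_voronoi v p : in_voronoi adj w loc rad p v <-> col v = p.
Proof.
rewrite in_voronoiE; split => [h|<-]; last exact: colP.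
apply/esym/val_inj; apply: le_anti; apply/andP; split; [exact: h | exact: colP].
Qed.

Lemma dsv_ge0 v p : 0 <= dsv v (loc p).
Proof. by have [y _ [-> _]] := dsv_att v p; apply: rd_ge0. Qed.

Lemma loc_col p v : v \in loc p -> col v = p.
Proof.
move=> vp; apply/col_voronoi/in_voronoiE => q.
have h0 : dsv v (loc p) <= 0 by have := dsv_lb v vp; rewrite rd_refl.
have [<-|qp] := eqVneq p q; first by [].
have [y yq [ey _]] := dsv_att v q.
have qp' : q != p by rewrite eq_sym.
have [_ hn] := Hnorm qp'.
have := le_lt_trans (lexx _) (lt_le_trans hn (distS_lb yq vp)).
rewrite lte_fin rd_sym -ey => h.
rewrite /val; lra.
Qed.

Lemma col_step v p : col v = p -> v \notin loc p ->
  exists u, [/\ adj v u, col u = p & dsv u (loc p) < dsv v (loc p)].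
Proof.
move=> cv vp.
have [x xp [ex _]] := dsv_att v p.
have [s hs es] := rd_att v x.
case: s hs es => [|u s'] hs es.
  by case/and3P: hs => _ _ /eqP /= e; move: vp; rewrite e xp.
case/and3P: hs => /= /andP [hvu ps'] /andP [_ us'] /eqP ls'.
have hps : is_path adj u x s' by apply/and3P; split => //; rewrite ls'.
have h1 := rd_lb hps.
have [wvu wpos] := Hw hvu.
have h2 := dsv_lb u xp.
have dlt : dsv u (loc p) < dsv v (loc p) by rewrite ex es /=; lra.
exists u; split => //.
apply/col_voronoi/in_voronoiE => q.
have [y yq [ey _]] := dsv_att u q.
have h3 := dsv_lb v yq.
have h4 := rd_front_tri y hvu.
have h5 := colP v q; rewrite cv in h5.
move: h5; rewrite /val => h5.
rewrite ex es /= in h5; rewrite ey in h4 *; lra.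
Qed.

Definition Ecol (p : 'I_3) := fun a b => [&& adj a b, col a == p & col b == p].

Lemma Ecol_sym p : symmetric (Ecol p).
Proof.
by move=> a b; rewrite /Ecol adj_sym; case: (col a == p); case: (col b == p); rewrite ?andbT ?andbF.
Qed.

Lemma to_loc p v : col v = p -> exists2 z, z \in loc p & connect (Ecol p) v z.
Proof.
move=> cv.
pose m v := #|[set y | dsv y (loc p) < dsv v (loc p)]%SET|.
have [n hn] : exists n, (m v <= n)%N by exists (m v).
elim: n v cv hn => [|n IH] v cv hn;
  (case: (boolP (v \in loc p)) => vp; first by exists v);
  have [u [hvu cu lt]] := col_step cv vp.
  have h : (0 < m v)%N by apply/card_gt0P; exists u; rewrite inE.
  by move: hn; rewrite leqn0 => /eqP e; rewrite e in h.
have hpr : [set y | dsv y (loc p) < dsv u (loc p)]%SET \proper [set y | dsv y (loc p) < dsv v (loc p)]%SET.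
  apply/fintype.properP; split.
    by apply/fintype.subsetP => y; rewrite !inE => h; apply: lt_trans h lt.
  by exists u; rewrite !inE ?lt // ltxx.
have := leq_trans (proper_card hpr) hn; rewrite ltnS -/(m u) => hn'.
have [z zp cz] := IH u cu hn'.
exists z => //; apply: connect_trans cz; apply: connect1.
by rewrite /Ecol hvu cv cu eqxx.
Qed.

Lemma col_conn x y : col x = col y ->
  connect (fun a b => [&& adj a b, col a == col x & col b == col x]) x y.
Proof.
move=> cxy.
have -> : (fun a b => [&& adj a b, col a == col x & col b == col x]) = Ecol (col x) by [].
have [zx zxp cx] := to_loc (erefl (col x)).
have [zy zyp cy] := to_loc (esym cxy).
have [_ [hic _]] := Hval (col x).
have czz : connect (Ecol (col x)) zx zy.
  apply: connect_sub (hic _ _ zxp zyp) => a b /= /and3P [hab ha hb].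
  by apply: connect1; rewrite /Ecol hab (loc_col ha) (loc_col hb) eqxx.
apply: connect_trans cx _; apply: connect_trans czz _.
by rewrite (sym_connect_sym (Ecol_sym (col x))).
Qed.

End Dist.

End AnalPart.


Module FinalPart.
From mathcomp Require Import all_boot all_order.
Set Implicit Arguments. Unset Strict Implicit. Unset Printing Implicit Defensive.
Local Close Scope classical_set_scope.

Lemma pig (a c p1 p2 p3 : 'I_3) : p1 != p2 -> p1 != p3 -> p2 != p3 ->
  (p1 == a) || (p1 == c) -> (p2 == a) || (p2 == c) -> (p3 == a) || (p3 == c) -> False.
Proof.
move=> n12 n13 n23 /orP [] /eqP e1 /orP [] /eqP e2 /orP [] /eqP e3;
  subst; rewrite ?eqxx in n12 n13 n23; by [].
Qed.

Lemma three_distinct (cu cv cx p1 p2 p3 : 'I_3) : p1 != p2 -> p1 != p3 -> p2 != p3 ->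
  (forall p, p \in [:: p1; p2; p3] -> [|| p == cu, p == cv | p == cx]) ->
  [/\ cu != cv, cv != cx & cx != cu].
Proof.
move=> n12 n13 n23 h.
have h1 := h p1; have h2 := h p2; have h3 := h p3.
rewrite !inE !eqxx ?orbT /= in h1 h2 h3.
have /(_ isT) h1' := h1; have /(_ isT) h2' := h2; have /(_ isT) h3' := h3.
split; apply/negP => /eqP e; subst.
- apply: (pig (a := cv) (c := cx) n12 n13 n23);
    [move: h1' | move: h2' | move: h3']; by case: (_ == cv); case: (_ == cx).
- apply: (pig (a := cu) (c := cx) n12 n13 n23);
    [move: h1' | move: h2' | move: h3']; by case: (_ == cu); case: (_ == cx).
- apply: (pig (a := cu) (c := cv) n12 n13 n23);
    [move: h1' | move: h2' | move: h3']; by case: (_ == cu); case: (_ == cv).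
Qed.

Lemma type1_tri (R : realType) (V : finType) (adj : rel V) (rot : V -> V -> V)
    (w : V -> V -> R) (loc : 'I_3 -> {set V}) (rad : 'I_3 -> R) :
  sphere_triangulation adj rot ->
  pos_weights adj w ->
  valid_objects adj loc rad ->
  generic adj w rad ->
  forall f, f \in faces adj rot -> type1_singular adj w loc rad f ->
  forall d, d \in f -> AnalPart.col adj w loc rad d.1 != AnalPart.col adj w loc rad d.2.
Proof.
move=> Hsph Hw Hval Hgen f fF [p1 [p2 [p3 [n12 n13 n23 [m12 m13 m23]]]]].
have [[asym airr] _ _ hconn _] := Hsph.
have colv := AnalPart.col_voronoi airr Hw hconn Hval Hgen.
set c := AnalPart.col adj w loc rad in colv *.
have [[u v] eD fE] := CombPart.facesP fF.
set x := rot v u in fE.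
have fE' : f = [set (u, v); (v, x); (x, u)] by rewrite fE.
have fv a : a \in face_vertices f -> [|| a == u, a == v | a == x].
  rewrite /face_vertices => /imsetP [d df ->]; move: df; rewrite fE' !inE.
  by case/orP => [/orP [] | ] /eqP -> /=; rewrite eqxx ?orbT.
case: m12 => a [b [fa fb va vb]]; case: m13 => a' [b' [fa' fb' va' vb']].
move/colv: va => ca; move/colv: vb => cb; move/colv: vb' => cb'.
have hcol z : z \in face_vertices f -> [|| c z == c u, c z == c v | c z == c x].
  by move/fv; case/or3P => /eqP ->; rewrite eqxx ?orbT.
have H3 : forall p, p \in [:: p1; p2; p3] -> [|| p == c u, p == c v | p == c x].
  move=> p; rewrite !inE => /or3P [] /eqP ->.
  - by rewrite -ca; apply: hcol.
  - by rewrite -cb; apply: hcol.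
  - by rewrite -cb'; apply: hcol.
have [duv dvx dxu] := three_distinct n12 n13 n23 H3.
move=> d; rewrite fE' !inE => /orP [/orP [] | ] /eqP -> //=.
Qed.

End FinalPart.

Theorem lemma4p8 (R : realType) (V : finType) (adj : rel V) (rot : V -> V -> V)
    (w : V -> V -> R) (loc : 'I_3 -> {set V}) (rad : 'I_3 -> R) :
  sphere_triangulation adj rot ->
  pos_weights adj w ->
  valid_objects adj loc rad ->
  generic adj w rad ->
  normal_family adj w loc rad ->
  forall S : {set {set V * V}},
    (forall f, f \in S -> f \in faces adj rot /\ type1_singular adj w loc rad f) ->
    (#|S| <= 2)%N.
Proof.
move=> Hsph Hw Hval Hgen Hnorm S hS.
have [[asym airr] _ _ hconn _] := Hsph.
apply: (CombPart.comb_main Hsph (c := AnalPart.col adj w loc rad)).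
  by move=> x y; apply: (AnalPart.col_conn asym airr Hw hconn Hval Hgen Hnorm).
move=> f /hS [fF ft]; split => //.
exact: (FinalPart.type1_tri Hsph Hw Hval Hgen fF ft).
Qed.
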